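(* Let $s\in\{1,2\}$. Let real sequences $\zeta(t)$ and $\phi_i(t)$ ($i\in\mathscr C_s$) satisfy, for every $t$ and every $k\in\mathscr C_s$, the update inclusions $$\zeta(t+1)-\zeta(t)\in\frac{\tau^2\eta}{2n}\sum_{i\in\mathscr C_s}\left[\zeta(t)+\phi_i(t)\right]^2+\left[-\tfrac32\eta\tau\kappa\mathcal L,\ \tfrac32\eta\tau\kappa\mathcal L\right],$$ $$\phi_k(t+1)-\phi_k(t)\in\eta\left[\frac{\kappa^2d}{4n}(|\phi_k(t)|+|\zeta(t)|)^2-\frac52\kappa\tau\mathcal L,\ \frac{3\kappa^2d}{4n}(|\phi_k(t)|+|\zeta(t)|)^2+\frac52\kappa\tau\mathcal L\right].$$ Suppose there exist constants $c^{(t)}\in\left(0,\frac{8}{1+8\mathfrak c}\right)$ and $8\le C^{(\phi)}\le n$, and $t_0\le c^{(t)}\left(\tau^2\eta|\zeta(0)|\right)^{-1}$, such that: 1. $\sqrt{\frac{32\mathcal Ln}{\mathfrak c^2\sqrt d}}\le|\zeta(0)|\le\frac{\mathfrak c(8-c^{(t)})}{16\eta\tau^2}$; 2. $|\phi_k(0)|\le\frac{\mathfrak c}{8}|\zeta(0)|$ for all $k\in\mathscr C_s$; 3. $\mathfrak c\le\min\left\{\frac14-\frac{2}{C^{(\phi)}},\frac{nC^{(\phi)}}{4},\left(\frac{n}{48}\right)^{1/3},\frac18\right\}$. Then for all $t\le t_0$ and all $k\in\mathscr C_s$: (a) if $\zeta(0)>0$, then $\left[\zeta(0)^{-1}-(\frac18-\mathfrak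 c)\eta\tau^2t\right]^{-1}\le\zeta(t)\le\left[\zeta(0)^{-1}-(\frac18+\mathfrak c)\eta\tau^2t\right]^{-1}$, while if $\zeta(0)<0$, then $\zeta(0)\le\zeta(t)\le0$; (b) $|\phi_k(t)|\le\frac{C^{(\phi)}\mathfrak c^2}{n}|\zeta(t)|+\frac{\mathfrak c}{8}|\zeta(0)|$.
   Context: Here $\tau,\kappa,\eta,\mathcal L>0$, $d,n$ positive integers with $4\mid n$, $\mathscr C_s\subseteq[n]$ has size $n/4$, and $\mathfrak c=\frac{8\kappa\sqrt d}{\tau}$. In the paper, $\zeta(t)=\zeta^{(s)}(t)=\boldsymbol w_r(t)^\top\boldsymbol\mu^{(s)}$ and $\phi_k(t)=\boldsymbol w_r(t)^\top\boldsymbol\xi_k$ for a fixed neuron of a one-hidden-layer network with cubic activation $\sigma(z)=\frac13z^3$ trained by gradient descent with step size $\eta$ on Gaussian mixture data with cluster-mean norm $\tau$, noise variance $\kappa^2$, dimension $d$; $\mathcal L$ bounds $|\sigma'|$. *)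

(* Defs.v *)
From HB Require Import structures.
From mathcomp Require Import all_boot all_order all_algebra.
From mathcomp Require Import all_classical all_reals all_analysis.
Set Implicit Arguments. Unset Strict Implicit. Unset Printing Implicit Defensive.
Import Order.TTheory GRing.Theory Num.Theory.
Local Open Scope ring_scope.

Definition frakc (R : realType) (kappa tau : R) (d : nat) : R :=
  8 * kappa * Num.sqrt (d%:R) / tau.

(* Main.v *)
Require Import Defs.
From HB Require Import structures.
From mathcomp Require Import all_boot all_order all_algebra.
From mathcomp Require Import all_classical all_reals all_analysis.
From mathcomp.algebra_tactics Require Import ring lra.
Import Order.TTheory GRing.Theory Num.Theory.
Local Open Scope ring_scope.
Lemma sqle (R : realFieldType) (x y : R) : 0 <= x -> x <= y -> x ^+ 2 <= y ^+ 2.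
Proof. by move=> x0 xy; rewrite !expr2; apply: ler_pM. Qed.

Lemma ric_low (R : realFieldType) (X k A z z' : R) :
  0 < X -> 0 < k -> 0 <= A -> 0 < X - A -> A * k <= X * (k - A) ->
  X^-1 <= z -> z + k * z ^+ 2 <= z' -> (X - A)^-1 <= z'.
Proof.
move=> X0 k0 A0 XA H hz hz'.
have wX : X * X^-1 = 1 by rewrite mulfV // gt_eqF.
have w0 : 0 < X^-1 by rewrite invr_gt0.
set w := X^-1 in wX w0 hz.
have h1 : w + k * w ^+ 2 <= z'.
  apply: le_trans hz'; rewrite !expr2.
  have : 0 <= (z - w) * (1 + k * (z + w)) by apply: mulr_ge0; nra.
  nra.
apply: le_trans h1.
rewrite -(ler_pM2r XA) mulVf ?gt_eqF //.
rewrite expr2.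
have : 0 <= w * w * (X * (k - A) - A * k) by apply: mulr_ge0; nra.
have e1 : (w + k * (w * w)) * (X - A) = X * w + k * w * (X * w) - A * w - A * k * (w * w) by ring.
rewrite e1 wX.
have e2 : w * w * (X * (k - A) - A * k) = k * w * (X * w) - A * w * (X * w) - A * k * (w * w) by ring.
rewrite e2 wX; lra.
Qed.

Lemma ric_up (R : realFieldType) (Y K A z z' : R) :
  0 < Y -> 0 <= K -> K <= A -> 0 < Y - A ->
  0 < z -> z <= Y^-1 -> z' <= z + K * z ^+ 2 -> z' <= (Y - A)^-1.
Proof.
move=> Y0 K0 KA YA z0 hz hz'.
have wY : Y * Y^-1 = 1 by rewrite mulfV // gt_eqF.
have w0 : 0 < Y^-1 by rewrite invr_gt0.
set w := Y^-1 in wY w0 hz.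
have h1 : z' <= w + K * w ^+ 2.
  apply: (le_trans hz'); rewrite !expr2.
  have : 0 <= (w - z) * (1 + K * (z + w)) by apply: mulr_ge0; nra.
  nra.
apply: le_trans h1 _.
rewrite -(ler_pM2r YA) mulVf ?gt_eqF //.
rewrite expr2.
have : 0 <= w * w * (A * Y - K * Y + A * K) by apply: mulr_ge0; nra.
have e1 : (w + K * (w * w)) * (Y - A) = Y * w + K * w * (Y * w) - A * w - A * K * (w * w) by ring.
rewrite e1 wY.
have e2 : w * w * (A * Y - K * Y + A * K) = A * w * (Y * w) - K * w * (Y * w) + A * K * (w * w) by ring.
rewrite e2 wY; lra.
Qed.

Lemma ric_neg (R : realFieldType) (W K A Z v v' : R) :
  0 < W -> 0 <= K -> 0 < A -> W^-1 <= v -> v <= Z -> W^-1 <= Z ->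
  2 * K * Z <= 1 -> K * A <= W * (A - K) -> v - K * v ^+ 2 <= v' ->
  (W + A)^-1 <= v'.
Proof.
move=> W0 K0 A0 hv vZ wZ KZ H hv'.
have wW : W * W^-1 = 1 by rewrite mulfV // gt_eqF.
have w0 : 0 < W^-1 by rewrite invr_gt0.
set w := W^-1 in wW w0 hv wZ.
have h1 : w - K * w ^+ 2 <= v'.
  apply: le_trans hv'; rewrite !expr2.
  have : 0 <= (v - w) * (1 - K * (v + w)) by apply: mulr_ge0; nra.
  nra.
apply: le_trans h1.
have WA : 0 < W + A by lra.
rewrite -(ler_pM2r WA) mulVf ?gt_eqF //.
rewrite expr2.
have : 0 <= w * w * (W * (A - K) - K * A) by apply: mulr_ge0; nra.
have e1 : (w - K * (w * w)) * (W + A) = W * w - K * w * (W * w) + A * w - A * K * (w * w) by ring.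
rewrite e1 wW.
have e2 : w * w * (W * (A - K) - K * A) = A * w * (W * w) - K * w * (W * w) - A * K * (w * w) by ring.
rewrite e2 wW; lra.
Qed.

Lemma pos_zeta (R : realFieldType) (c a Z E r z z' X Y p : R) :
  0 < c -> c <= 1/8 -> 0 < a -> 0 < Z -> 0 < r -> r <= 1/8 -> 0 <= E ->
  E * 512 <= 3 * a * c^+3 * Z^+2 * r ->
  Z <= z -> 0 <= p -> p <= c * z / 4 ->
  a / 8 * (z - p)^+2 - E <= z' - z -> z' - z <= a / 8 * (z + p)^+2 + E ->
  0 < X - (1/8 - c) * a -> 2 * a <= c * (X - (1/8 - c) * a) -> X^-1 <= z ->
  0 < Y -> z <= Y^-1 -> 0 < Y - (1/8 + c) * a ->
  [/\ (X - (1/8 - c) * a)^-1 <= z', z' <= (Y - (1/8 + c) * a)^-1 &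
      a * (1 - c / 2) / 8 * z^+2 <= z' - z].
Proof.
move=> c0 c8 a0 Z0 r0 r8 E0 HE Zz p0 pz Hlo Hhi XA cX Xz Y0 zY YA.
have z0 : 0 < z by lra.
have Ez : E * 512 <= 3 * a * c^+3 * z^+2 / 8.
  have : Z^+2 <= z^+2 by apply: sqle; lra.
  have : 0 <= a * c^+3 by apply: mulr_ge0; [lra| apply: exprn_ge0; lra].
  move=> h1 h2; apply: (le_trans HE).
  have : a * c^+3 * Z^+2 * r <= a * c^+3 * z^+2 / 8.
    have h3 : a * c^+3 * Z^+2 * r <= a * c^+3 * Z^+2 / 8.
      have : 0 <= a * c^+3 * Z^+2 by apply: mulr_ge0 => //; apply: exprn_ge0; lra.
      nra.
    apply: (le_trans h3); nra.
  lra.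
have c3 : c^+3 <= c^+2 / 8 by rewrite !exprS expr0; nra.
have az2 : 0 <= a * z^+2 by apply: mulr_ge0; [lra| apply: exprn_ge0; lra].
have Ec : E <= a * c^+2 * z^+2 / 128.
  have : a * z^+2 * c^+3 <= a * z^+2 * (c^+2 / 8) by apply: ler_wpM2l.
  lra.
have inclo : a * (1 - c / 2) / 8 * z^+2 <= z' - z.
  apply: le_trans Hlo.
  have h : (1 - c / 4) * z <= z - p by lra.
  have h2 : ((1 - c / 4) * z)^+2 <= (z - p)^+2.
    rewrite !expr2; have : 0 <= (1 - c/4) * z by apply: mulr_ge0; lra.
    nra.
  have : a / 8 * ((1 - c / 4) * z)^+2 <= a / 8 * (z - p)^+2 by apply: ler_wpM2l => //; lra.
  have e : a / 8 * ((1 - c / 4) * z)^+2 = a * (1 - c / 2) / 8 * z^+2 + a * c^+2 * z^+2 / 128.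
    by rewrite !expr2; field.
  lra.
have inchi : z' - z <= a * (1 + c) / 8 * z^+2.
  apply: (le_trans Hhi).
  have h2 : (z + p)^+2 <= ((1 + c / 4) * z)^+2 by apply: sqle; lra.
  have : a / 8 * (z + p)^+2 <= a / 8 * ((1 + c / 4) * z)^+2 by apply: ler_wpM2l => //; lra.
  have e : a * (1 + c) / 8 * z^+2 = a / 8 * ((1 + c / 4) * z)^+2 + a * z^+2 * (c / 16 - c^+2 / 128).
    by rewrite !expr2; field.
  have : a * z^+2 * (c^+2 / 128) <= a * z^+2 * (c / 16 - c^+2 / 128).
    apply: ler_wpM2l => //; rewrite expr2; nra.
  have : a * z^+2 * (c^+2 / 128) = a * c^+2 * z^+2 / 128 by ring.
  lra.
split => //.
- have A0 : 0 <= (1/8 - c) * a by apply: mulr_ge0; lra.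
  have X0 : 0 < X by lra.
  have k0 : 0 < a * (1 - c / 2) / 8.
    have : 0 < a * (1 - c / 2) by apply: mulr_gt0; lra.
    lra.
  have HH : (1/8 - c) * a * (a * (1 - c / 2) / 8) <= X * (a * (1 - c / 2) / 8 - (1/8 - c) * a).
    have Xc : 2 * a <= X * c.
      have : 0 <= c * ((1/8 - c) * a) by apply: mulr_ge0; lra.
      lra.
    have e : X * (a * (1 - c / 2) / 8 - (1 / 8 - c) * a) = X * a * c * (15/16) by field.
    rewrite e.
    have : 2 * a * a * (15/16) <= X * a * c * (15/16).
      nra.
    have : (1 / 8 - c) * a * (a * (1 - c / 2) / 8) <= a * a / 64.
      have : (1 / 8 - c) * (1 - c / 2) <= 1/8 by nra.
      have : 0 <= a * a by nra.
      nra.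
    have : 0 <= a * a by nra.
    lra.
  apply: (@ric_low R X (a * (1 - c / 2) / 8) ((1/8 - c) * a) z) => //.
  by move: inclo; rewrite expr2; lra.
- have K0 : 0 <= a * (1 + c) / 8.
    have : 0 < a * (1 + c) by apply: mulr_gt0; lra.
    lra.
  have KA : a * (1 + c) / 8 <= (1/8 + c) * a.
    have : 0 <= a * c by apply: mulr_ge0; lra.
    lra.
  apply: (@ric_up R Y (a * (1 + c) / 8) ((1/8 + c) * a) z) => //.
  by move: inchi; rewrite !expr2; lra.
Qed.

Lemma pos_phi (R : realFieldType) (c a Z G r B z z' f f' : R) :
  0 < c -> c <= 1/8 -> 0 < a -> 0 < Z -> 0 < r -> r <= 1/8 -> 0 <= G ->
  G * 512 <= 5 * a * c^+3 * Z^+2 * r -> 8 * c^+2 * r <= B -> B <= c^+2 ->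
  Z <= z -> a * (1 - c / 2) / 8 * z^+2 <= z' - z ->
  `|f'| <= `|f| + 3 * a * c^+2 * r / 256 * (`|f| + z)^+2 + G ->
  `|f| <= B * z + c / 8 * Z -> `|f'| <= B * z' + c / 8 * Z.
Proof.
move=> c0 c8 a0 Z0 r0 r8 G0 HG HB1 HB2 Zz inc Hf' Hf.
set F := `|f| in Hf' Hf.
have F0 : 0 <= F by rewrite /F normr_ge0.
have z0 : 0 < z by lra.
have cc : c^+2 <= c / 8 by rewrite expr2; nra.
have Bz : B * z <= c / 8 * z by nra.
have Fz : F <= c * z / 4 by nra.
have h1 : (F + z)^+2 <= 2 * z^+2.
  have cz : c * z <= z / 8 by nra.
  have : (F + z)^+2 <= ((5/4) * z)^+2 by apply: sqle; lra.
  rewrite exprMn; move=> H; have : 0 <= z^+2 by apply: exprn_ge0; lra.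
  move: H; rewrite !expr2; lra.
set M := a * c^+2 * r * z^+2.
have M0 : 0 <= M.
  rewrite /M; apply: mulr_ge0; last by apply: exprn_ge0; lra.
  apply: mulr_ge0; last lra.
  apply: mulr_ge0; [lra | apply: exprn_ge0; lra].
have acr0 : 0 <= a * c^+2 * r.
  apply: mulr_ge0; last lra.
  apply: mulr_ge0; [lra | apply: exprn_ge0; lra].
have h2 : 3 * a * c^+2 * r / 256 * (F + z)^+2 <= 6 * M / 256.
  have : a * c^+2 * r * (F + z)^+2 <= a * c^+2 * r * (2 * z^+2) by apply: ler_wpM2l.
  rewrite /M; lra.
have h3 : G * 512 <= 5 * M / 8.
  apply: (le_trans HG).
  have e1 : 5 * a * c^+3 * Z^+2 * r = 5 * (a * c^+2 * r) * (c * Z^+2) by ring.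
  have e2 : 5 * M / 8 = 5 * (a * c^+2 * r) * (z^+2 / 8) by rewrite /M; field.
  rewrite e1 e2; apply: ler_wpM2l; first lra.
  have : Z^+2 <= z^+2 by apply: sqle; lra.
  have : 0 <= Z^+2 by apply: exprn_ge0; lra.
  nra.
have h4 : M * (15 / 16) <= B * (z' - z).
  have inc0 : 0 <= z' - z.
    apply: le_trans inc.
    apply: mulr_ge0; last by apply: exprn_ge0; lra.
    have : 0 <= a * (1 - c/2) by apply: mulr_ge0; lra.
    lra.
  have : 8 * c^+2 * r * (z' - z) <= B * (z' - z) by apply: ler_wpM2r.
  have : 8 * c^+2 * r * (a * (1 - c / 2) / 8 * z^+2) <= 8 * c^+2 * r * (z' - z).
    apply: ler_wpM2l => //.
    have : 0 <= c^+2 * r by apply: mulr_ge0; [apply: exprn_ge0; lra| lra].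
    lra.
  have e : 8 * c^+2 * r * (a * (1 - c / 2) / 8 * z^+2) = M * (1 - c / 2) by rewrite /M; field.
  rewrite e; nra.
lra.
Qed.

Lemma neg_zeta (R : realFieldType) (c a Z E r v v' W p : R) :
  0 < c -> c <= 1/8 -> 0 < a -> 0 < Z -> 0 < r -> r <= 1/8 -> 0 <= E ->
  E * 512 <= 3 * a * c^+3 * Z^+2 * r -> a * Z <= c / 2 ->
  0 < W -> W^-1 <= v -> v <= Z -> W^-1 <= Z -> Z <= 2 * v ->
  0 <= p -> p <= 3 * c / 8 * v ->
  a / 8 * (v - p)^+2 - E <= v - v' -> v - v' <= a / 8 * (v + p)^+2 + E ->
  [/\ (W + (1/8 + c) * a)^-1 <= v', v' <= v &
      a / 8 * (1 - 3 * c / 8)^+2 * v^+2 <= v - v' + E].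
Proof.
move=> c0 c8 a0 Z0 r0 r8 E0 HE aZ W0 Wv vZ WZ Zv p0 pv Hlo Hhi.
have v0 : 0 < v by lra.
have av2 : 0 <= a * v^+2 by apply: mulr_ge0; [lra| apply: exprn_ge0; lra].
have Ev : E <= a * c^+2 * v^+2 / 256.
  have h : 3 * a * c^+3 * Z^+2 * r <= 3 * a * c^+3 * (4 * v^+2) * (1/8).
    have : Z^+2 <= 4 * v^+2.
      have -> : 4 * v^+2 = (2 * v)^+2 by rewrite exprMn; congr (_ * _); rewrite expr2; lra.
      by apply: sqle; lra.
    have : 0 <= a * c^+3 by apply: mulr_ge0; [lra| apply: exprn_ge0; lra].
    have : 0 <= Z^+2 by apply: exprn_ge0; lra.
    move=> h1 h2 h3.
    have : a * c^+3 * Z^+2 * r <= a * c^+3 * Z^+2 * (1/8).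
      apply: ler_wpM2l => //; apply: mulr_ge0 => //.
    have : a * c^+3 * Z^+2 <= a * c^+3 * (4 * v^+2) by apply: ler_wpM2l.
    lra.
  have : a * v^+2 * c^+3 <= a * v^+2 * (c^+2 / 8) by apply: ler_wpM2l => //; rewrite !exprS expr0; nra.
  lra.
have Ev2 : E <= a * v^+2 * (c / 2048).
  have : a * v^+2 * c^+2 <= a * v^+2 * (c / 8) by apply: ler_wpM2l => //; rewrite expr2; nra.
  lra.
have lo : a / 8 * (1 - 3 * c / 8)^+2 * v^+2 <= v - v' + E.
  have h : (1 - 3 * c / 8) * v <= v - p by lra.
  have h2 : ((1 - 3 * c / 8) * v)^+2 <= (v - p)^+2.
    by apply: sqle => //; apply: mulr_ge0; lra.
  have : a / 8 * ((1 - 3 * c / 8) * v)^+2 <= a / 8 * (v - p)^+2 by apply: ler_wpM2l => //; lra.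
  have e : a / 8 * ((1 - 3 * c / 8) * v)^+2 = a / 8 * (1 - 3 * c / 8)^+2 * v^+2 by rewrite !expr2; ring.
  lra.
split => //.
- have K0 : 0 <= a * (1 + c) / 8.
    have : 0 < a * (1 + c) by apply: mulr_gt0; lra.
    lra.
  have A0 : 0 < (1/8 + c) * a by apply: mulr_gt0; lra.
  have KZ : 2 * (a * (1 + c) / 8) * Z <= 1.
    have e : 2 * (a * (1 + c) / 8) * Z = (a * Z) * (1 + c) / 4 by field.
    rewrite e; nra.
  have WZ1 : 1 <= Z * W.
    have : W^-1 * W = 1 by rewrite mulVf // gt_eqF.
    nra.
  have HH : a * (1 + c) / 8 * ((1/8 + c) * a) <= W * ((1/8 + c) * a - a * (1 + c) / 8).
    have e : W * ((1/8 + c) * a - a * (1 + c) / 8) = W * a * c * (7/8) by field.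
    rewrite e.
    have : 0 < a * c by apply: mulr_gt0.
    move=> ac0.
    suff : Z * (a * (1 + c) / 8 * ((1 / 8 + c) * a)) <= Z * (W * a * c * (7 / 8)).
      by rewrite ler_pM2l.
    have e2 : Z * (W * a * c * (7 / 8)) = (Z * W) * (a * c) * (7/8) by ring.
    rewrite e2.
    have : a * c * (7/8) <= Z * W * (a * c) * (7/8) by nra.
    have e3 : Z * (a * (1 + c) / 8 * ((1 / 8 + c) * a)) = (a * Z) * a * ((1 + c) * (1 + 8 * c)) / 64 by field.
    rewrite e3.
    have : (1 + c) * (1 + 8 * c) <= 3 by nra.
    have : 0 <= (a * Z) * a by nra.
    have : (a * Z) * a <= c / 2 * a by nra.
    nra.
  apply: (@ric_neg R W (a * (1 + c) / 8) ((1/8 + c) * a) Z v) => //.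
  have : v - v' <= a * (1 + c) / 8 * v^+2.
    apply: (le_trans Hhi).
    have h2 : (v + p)^+2 <= ((1 + 3 * c / 8) * v)^+2 by apply: sqle; lra.
    have : a / 8 * (v + p)^+2 <= a / 8 * ((1 + 3 * c / 8) * v)^+2 by apply: ler_wpM2l => //; lra.
    have e : a * (1 + c) / 8 * v^+2 = a / 8 * ((1 + 3 * c / 8) * v)^+2 + a * v^+2 * (c / 32 - 9 * c^+2 / 512).
      by rewrite !expr2; field.
    have : a * v^+2 * (c / 2048) <= a * v^+2 * (c / 32 - 9 * c^+2 / 512).
      apply: ler_wpM2l => //; rewrite expr2; nra.
    lra.
  lra.
- have : 0 <= a / 8 * (1 - 3 * c / 8)^+2 * v^+2 - E.
    have e : a / 8 * (1 - 3 * c / 8)^+2 * v^+2 = a * v^+2 * ((1 - 3 * c / 8)^+2 / 8) by ring.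
    rewrite e.
    have : a * v^+2 * (c / 2048) <= a * v^+2 * ((1 - 3 * c / 8)^+2 / 8).
      apply: ler_wpM2l => //; rewrite expr2; nra.
    lra.
  lra.
Qed.

Lemma neg_phi (R : realFieldType) (c a r v G inc E F : R) :
  0 < c -> c <= 1/8 -> 0 < a -> 0 < r -> 0 <= F -> F <= 3 * c / 8 * v -> 0 <= v ->
  a / 8 * (1 - 3 * c / 8)^+2 * v^+2 <= inc + E ->
  3 * a * c^+2 * r / 256 * (F + v)^+2 + G <= c^+2 * r / 4 * inc + (G + c^+2 * r / 4 * E).
Proof.
move=> c0 c8 a0 r0 F0 Fv v0 H.
have acr0 : 0 <= a * c^+2 * r.
  apply: mulr_ge0; last lra.
  apply: mulr_ge0; [lra | apply: exprn_ge0; lra].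
have cv : c * v <= v / 8 by nra.
have h1 : (F + v)^+2 <= (67/64)^+2 * v^+2.
  rewrite -exprMn; apply: sqle; lra.
have h2 : (61/64)^+2 * v^+2 <= (1 - 3 * c / 8)^+2 * v^+2.
  rewrite -!exprMn; apply: sqle; first by apply: mulr_ge0; lra.
  by apply: ler_wpM2r => //; lra.
have cr0 : 0 <= c^+2 * r by apply: mulr_ge0; [apply: exprn_ge0; lra| lra].
have h3 : c^+2 * r / 4 * (a / 8 * (1 - 3 * c / 8)^+2 * v^+2) <= c^+2 * r / 4 * (inc + E).
  by apply: ler_wpM2l => //; lra.
have h4 : a * c^+2 * r * (F + v)^+2 <= a * c^+2 * r * ((67/64)^+2 * v^+2) by apply: ler_wpM2l.
have h5 : a * c^+2 * r * ((61/64)^+2 * v^+2) <= a * c^+2 * r * ((1 - 3 * c / 8)^+2 * v^+2) by apply: ler_wpM2l.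
have e1 : c^+2 * r / 4 * (a / 8 * (1 - 3 * c / 8)^+2 * v^+2) = a * c^+2 * r * ((1 - 3 * c / 8)^+2 * v^+2) / 32 by field.
have : 0 <= a * c^+2 * r * v^+2 by apply: mulr_ge0 => //; apply: exprn_ge0.
have e2 : a * c^+2 * r * ((67/64)^+2 * v^+2) = (67/64)^+2 * (a * c^+2 * r * v^+2) by ring.
have e3 : a * c^+2 * r * ((61/64)^+2 * v^+2) = (61/64)^+2 * (a * c^+2 * r * v^+2) by ring.
rewrite e2 in h4; rewrite e3 in h5; rewrite e1 in h3.
have e4 : c^+2 * r / 4 * inc + (G + c^+2 * r / 4 * E) = c^+2 * r / 4 * (inc + E) + G by ring.
rewrite e4.
have e5 : 3 * a * c^+2 * r / 256 * (F + v)^+2 = 3 / 256 * (a * c^+2 * r * (F + v)^+2) by ring.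
rewrite e5.
rewrite !expr2 in h4 h5 *.
lra.
Qed.

Lemma sum_bnd (R : realFieldType) n (Cs : {set 'I_n}) (F : 'I_n -> R) lo hi :
  (forall i, i \in Cs -> lo <= F i <= hi) ->
  #|Cs|%:R * lo <= \sum_(i in Cs) F i <= #|Cs|%:R * hi.
Proof.
move=> H; apply/andP; split; rewrite mulr_natl -sumr_const; apply: ler_sum => i /H /andP[] //.
Qed.

Lemma sq_bnd (R : realFieldType) (y x p : R) : `|x| <= p -> p <= `|y| ->
  (`|y| - p)^+2 <= (y + x)^+2 <= (`|y| + p)^+2.
Proof.
move=> xp py.
rewrite -(real_normK (num_real (y + x))).
have h1 : `|y + x| <= `|y| + p by apply: (le_trans (ler_normD _ _)); lra.
have h2 : `|y| <= `|y + x| + p.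
  have : `|y| = `|(y + x) + (- x)| by congr `|_|; ring.
  move=> ->; apply: (le_trans (ler_normD _ _)); rewrite normrN; lra.
apply/andP; split; apply: sqle; try lra; exact: normr_ge0.
Qed.

Lemma pos_X (R : realFieldType) (c a Z ct T X : R) :
  0 < c -> c <= 1/8 -> 0 < a -> 0 < Z -> 0 <= T -> T <= ct ->
  ct * (1 + 8 * c) < 8 -> 16 * (a * Z) <= c * (8 - ct) ->
  Z * X = 1 - (1/8 - c) * T -> 0 < X /\ 2 * a <= c * X.
Proof.
move=> c0 c8 a0 Z0 T0 Tct ctc aZ e.
have ct0 : ct < 8 by nra.
have h : 1 - ct / 8 <= Z * X by rewrite e; nra.
have h2 : 2 * (a * Z) <= c * (Z * X) by nra.
split.
  have : 0 < Z * X by lra.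
  by rewrite pmulr_rgt0.
have : (2 * a) * Z <= (c * X) * Z.
  have -> : 2 * a * Z = 2 * (a * Z) by ring.
  have -> : c * X * Z = c * (Z * X) by ring.
  exact: h2.
by rewrite ler_pM2r.
Qed.

Lemma pos_Y (R : realFieldType) (c Z ct T Y : R) :
  0 < c -> 0 < Z -> 0 <= T -> T <= ct ->
  ct * (1 + 8 * c) < 8 -> Z * Y = 1 - (1/8 + c) * T -> 0 < Y.
Proof.
move=> c0 Z0 T0 Tct ctc e.
have : 0 < Z * Y by rewrite e; nra.
by rewrite pmulr_rgt0.
Qed.

Lemma neg_aux (R : realFieldType) (c a Z r E G B v w t : R) :
  0 < c -> c <= 1/8 -> 0 < a -> 0 < Z -> 0 < r -> r <= 1/8 -> 0 <= E ->
  E * 512 <= 3 * a * c^+3 * Z^+2 * r -> 0 <= G ->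
  G * 512 <= 5 * a * c^+3 * Z^+2 * r -> 0 <= t -> t * (a * Z) <= 8 ->
  Z <= 2 * v -> 0 <= w -> w <= Z -> 8 * c^+2 * r <= B ->
  let p := c / 8 * Z + c^+2 * r / 4 * w + t * (G + c^+2 * r / 4 * E) in
  [/\ 0 <= p, p <= 3 * c / 8 * v & p <= B * v + c / 8 * Z].
Proof.
move=> c0 c8 a0 Z0 r0 r8 E0 HE G0 HG t0 taZ Zv w0 wZ HB p.
have c2 : 0 <= c^+2 by apply: exprn_ge0; lra.
have cr : 0 <= c^+2 * r by apply: mulr_ge0; lra.
have cr2 : c^+2 * r <= c / 64 by rewrite expr2; nra.
have E1 : c^+2 * r / 4 * E <= E / 4.
  have : c^+2 * r * E <= 1 * E by apply: ler_wpM2r => //; lra.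
  lra.
set e := G + c^+2 * r / 4 * E.
have e0 : 0 <= e by rewrite /e; nra.
have he : e * 512 <= 6 * (a * Z) * (c^+3 * Z * r).
  have -> : 6 * (a * Z) * (c^+3 * Z * r) = 5 * a * c^+3 * Z^+2 * r + a * c^+3 * Z^+2 * r.
    by rewrite expr2; ring.
  rewrite /e.
  have : (c^+2 * r / 4 * E) * 512 <= E * 128 by lra.
  have : E * 512 <= 3 * a * c^+3 * Z^+2 * r by [].
  have : 0 <= a * c^+3 * Z^+2 * r.
    apply: mulr_ge0; last lra.
    apply: mulr_ge0; last by apply: exprn_ge0; lra.
    apply: mulr_ge0; [lra| apply: exprn_ge0; lra].
  lra.
have K0 : 0 <= c^+3 * Z * r.
  apply: mulr_ge0; last lra.
  apply: mulr_ge0; [apply: exprn_ge0; lra| lra].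
have te : t * e <= 3 * (c^+3 * Z * r) / 32.
  have aZ0 : 0 < a * Z by apply: mulr_gt0.
  suff : (t * e) * (a * Z) <= (3 * (c^+3 * Z * r) / 32) * (a * Z) by rewrite ler_pM2r.
  have -> : t * e * (a * Z) = (t * (a * Z)) * e by ring.
  have : (t * (a * Z)) * e <= 8 * e by apply: ler_wpM2r.
  have -> : 3 * (c ^+ 3 * Z * r) / 32 * (a * Z) = 6 * (a * Z) * (c^+3 * Z * r) * 8 / 512 by field.
  lra.
have c3 : c^+3 * Z * r <= c^+2 * r * Z / 8.
  have -> : c^+3 * Z * r = (c^+2 * r * Z) * c by rewrite exprSr; ring.
  have : 0 <= c^+2 * r * Z by apply: mulr_ge0; lra.
  nra.
have cw : c^+2 * r / 4 * w <= c^+2 * r / 4 * Z by apply: ler_wpM2l => //; lra.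
have crZ : 0 <= c^+2 * r * Z by apply: mulr_ge0; lra.
have crZ2 : c^+2 * r * Z <= c / 64 * Z by apply: ler_wpM2r; lra.
have cZ : c * Z <= c * (2 * v) by apply: ler_wpM2l; lra.
have cw0 : 0 <= c^+2 * r / 4 * w by apply: mulr_ge0 => //; lra.
have te0 : 0 <= t * e by apply: mulr_ge0.
have cZ0 : 0 <= c * Z by apply: mulr_ge0; lra.
split.
- rewrite /p -/e; lra.
- rewrite /p -/e.
  have : c / 8 * Z + c^+2 * r / 4 * Z + 3 * (c^+3 * Z * r) / 32 <= 3 * c / 8 * v by lra.
  lra.
- rewrite /p -/e.
  have : c^+2 * r * v <= B * v by apply: ler_wpM2r; lra.
  have : c^+2 * r * Z <= c^+2 * r * (2 * v) by apply: ler_wpM2l.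
  lra.
Qed.

Lemma pbnd (R : realFieldType) (c B Z z : R) :
  0 < c -> c <= 1/8 -> 0 <= B -> B <= c^+2 -> 0 < Z -> Z <= z ->
  0 <= B * z + c / 8 * Z /\ B * z + c / 8 * Z <= c * z / 4.
Proof.
move=> c0 c8 B0 Bc Z0 Zz.
have cc : c^+2 <= c / 8 by rewrite expr2; nra.
have : B * z <= c / 8 * z by apply: ler_wpM2r; lra.
have : c / 8 * Z <= c / 8 * z by apply: ler_wpM2l; lra.
have : 0 <= B * z by apply: mulr_ge0; lra.
have : 0 <= c / 8 * Z by apply: mulr_ge0; lra.
lra.
Qed.

Lemma negZv (R : realFieldType) (Z W v : R) :
  0 < Z -> 0 < W -> W^-1 <= v -> Z * W <= 2 -> Z <= 2 * v.
Proof.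
move=> Z0 W0 Wv ZW.
have : W^-1 * W = 1 by rewrite mulVf // gt_eqF.
have : W^-1 * W <= v * W by apply: ler_wpM2r; lra.
move=> h1 h2.
have : Z * 1 <= Z * (v * W) by apply: ler_wpM2l; lra.
nra.
Qed.

Lemma invle (R : realFieldType) (Z W : R) : 0 < Z -> 0 < W -> 1 <= Z * W -> W^-1 <= Z.
Proof.
move=> Z0 W0 h.
have : W^-1 * W = 1 by rewrite mulVf // gt_eqF.
rewrite -(ler_pM2r W0); lra.
Qed.

Lemma leinv (R : realFieldType) (Z X : R) : 0 < X -> Z * X <= 1 -> Z <= X^-1.
Proof.
move=> X0 h.
have : X^-1 * X = 1 by rewrite mulVf // gt_eqF.
rewrite -(ler_pM2r X0); lra.
Qed.



Arguments pos_X {R c a Z ct T X}.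
Arguments pos_Y {R c Z ct T Y}.
Arguments pbnd {R c B Z z}.
Arguments pos_zeta {R c a Z E r z z' X Y p}.
Arguments pos_phi {R c a Z G r B z z' f f'}.
Arguments neg_zeta {R c a Z E r v v' W p}.
Arguments neg_phi {R c a r v G inc E F}.
Arguments neg_aux {R c a Z r E G B v w t}.
Arguments negZv {R Z W v}.
Arguments invle {R Z W}.
Arguments leinv {R Z X}.

Ltac nz := repeat match goal with
 | |- is_true (_ && _) => apply/andP; split
 | |- is_true (_ * _ != 0) => apply: mulf_neq0
 | |- is_true (_ ^+ _ != 0) => apply: expf_neq0
 | |- is_true (_ != 0) => apply: lt0r_neq0
 end; try lra.

Lemma pos_case (R : realFieldType) n (Cs : {set 'I_n}) (zeta : nat -> R)
  (phi : 'I_n -> nat -> R) (a c E G r B ct : R) (t0 : nat) :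
  0 < c -> c <= 1/8 -> 0 < a -> 0 < zeta 0%N -> 0 < r -> r <= 1/8 -> 0 <= E ->
  E * 512 <= 3 * a * c^+3 * (zeta 0%N)^+2 * r -> 0 <= G ->
  G * 512 <= 5 * a * c^+3 * (zeta 0%N)^+2 * r ->
  16 * (a * zeta 0%N) <= c * (8 - ct) -> ct * (1 + 8 * c) < 8 ->
  (forall t, (t <= t0)%N -> t%:R * (a * zeta 0%N) <= ct) ->
  8 * c^+2 * r <= B -> B <= c^+2 ->
  (forall t p, 0 <= p -> (forall i, i \in Cs -> `|phi i t| <= p) ->
    zeta t.+1 - zeta t <= a / 8 * (`|zeta t| + p) ^+ 2 + E /\
    (p <= `|zeta t| -> a / 8 * (`|zeta t| - p) ^+ 2 - E <= zeta t.+1 - zeta t)) ->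
  (forall t k, k \in Cs -> `|phi k t.+1| <=
    `|phi k t| + 3 * a * c ^+ 2 * r / 256 * (`|phi k t| + `|zeta t|) ^+ 2 + G) ->
  (forall k, k \in Cs -> `|phi k 0%N| <= c / 8 * zeta 0%N) ->
  forall t, (t <= t0)%N ->
  [/\ ((zeta 0%N)^-1 - (1/8 - c) * a * t%:R)^-1 <= zeta t,
      zeta t <= ((zeta 0%N)^-1 - (1/8 + c) * a * t%:R)^-1 &
      forall k, k \in Cs -> `|phi k t| <= B * `|zeta t| + c / 8 * zeta 0%N].
Proof.
move=> c0 c8 a0 z00 r0 r8 E0 HE G0 HG aZc ctc HT HB1 HB2 Zstep Pstep Hph0.
have B0 : 0 <= B.
  have : 0 <= 8 * c^+2 * r by apply: mulr_ge0; [apply: mulr_ge0; [lra| apply: exprn_ge0; lra] | lra].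
  move=> h; exact: le_trans h HB1.
have XZ : forall t, zeta 0%N * ((zeta 0%N)^-1 - (1/8 - c) * a * t%:R) =
    1 - (1/8 - c) * (t%:R * (a * zeta 0%N)).
  by move=> t; field; nz.
have YZ : forall t, zeta 0%N * ((zeta 0%N)^-1 - (1/8 + c) * a * t%:R) =
    1 - (1/8 + c) * (t%:R * (a * zeta 0%N)).
  by move=> t; field; nz.
have T0 : forall t, 0 <= t%:R * (a * zeta 0%N).
  by move=> t; apply: mulr_ge0; [exact: ler0n | apply: mulr_ge0; lra].
elim=> [|t IH] ht.
  rewrite !mulr0 !subr0 invrK; split; [exact: lexx | exact: lexx |].
  move=> k hk; have h := Hph0 k hk.
  have : 0 <= B * `|zeta 0%N| by apply: mulr_ge0 => //; exact: normr_ge0.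
  move: h; clear; lra.
have [Xz zY Hf] := IH (ltnW ht).
set X := (zeta 0%N)^-1 - (1/8 - c) * a * t%:R in Xz XZ.
set Y := (zeta 0%N)^-1 - (1/8 + c) * a * t%:R in zY YZ.
have eX : (zeta 0%N)^-1 - (1/8 - c) * a * t.+1%:R = X - (1/8 - c) * a.
  by rewrite /X -natr1; ring.
have eY : (zeta 0%N)^-1 - (1/8 + c) * a * t.+1%:R = Y - (1/8 + c) * a.
  by rewrite /Y -natr1; ring.
have hT1 := HT _ ht.
have hT := HT _ (ltnW ht).
have [X1p cX1] := pos_X c0 c8 a0 z00 (T0 t.+1) hT1 ctc aZc (XZ t.+1).
have Y1p := pos_Y c0 z00 (T0 t.+1) hT1 ctc (YZ t.+1).
have Yp := pos_Y c0 z00 (T0 t) hT ctc (YZ t).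
rewrite eX in X1p cX1; rewrite eY in Y1p.
have A0 : 0 <= (1/8 - c) * a by apply: mulr_ge0; lra.
have Xp : 0 < X by move: X1p A0; clear; lra.
have Zz : zeta 0%N <= zeta t.
  apply: le_trans _ Xz; apply: leinv => //; rewrite XZ.
  have : 0 <= (1/8 - c) * (t%:R * (a * zeta 0%N)) by apply: mulr_ge0; [lra | exact: T0].
  clear; lra.
have zt0 : 0 < zeta t by move: z00 Zz; clear; lra.
have nz0 : `|zeta t| = zeta t by rewrite ger0_norm // ltW.
rewrite nz0 in Hf.
have [p0 pz] := pbnd c0 c8 B0 HB2 z00 Zz.
have [hhi hlo] := Zstep t (B * zeta t + c / 8 * zeta 0%N) p0 Hf.
have pz' : B * zeta t + c / 8 * zeta 0%N <= `|zeta t|.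
  rewrite nz0; have : c * zeta t <= zeta t / 8 by nra.
  move: pz zt0; clear; lra.
have hlo' := hlo pz'.
rewrite nz0 in hhi hlo'.
have [h1 h2 h3] := pos_zeta c0 c8 a0 z00 r0 r8 E0 HE Zz p0 pz hlo' hhi X1p cX1 Xz Yp zY Y1p.
rewrite eX eY; split => //.
have inc0 : 0 <= zeta t.+1 - zeta t.
  apply: le_trans h3; apply: mulr_ge0; last by apply: exprn_ge0; lra.
  have : 0 <= a * (1 - c / 2) by apply: mulr_ge0; lra.
  clear; lra.
have nz1 : `|zeta t.+1| = zeta t.+1 by rewrite ger0_norm //; move: inc0 zt0; clear; lra.
move=> k hk; rewrite nz1.
have hP := Pstep t k hk; rewrite nz0 in hP.
exact: (pos_phi c0 c8 a0 z00 r0 r8 G0 HG HB1 HB2 Zz h3 hP (Hf k hk)).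
Qed.

Lemma neg_case (R : realFieldType) n (Cs : {set 'I_n}) (zeta : nat -> R)
  (phi : 'I_n -> nat -> R) (a c E G r B ct Z : R) (t0 : nat) :
  0 < c -> c <= 1/8 -> 0 < a -> 0 < Z -> Z = - zeta 0%N -> 0 < r -> r <= 1/8 -> 0 <= E ->
  E * 512 <= 3 * a * c^+3 * Z^+2 * r -> 0 <= G ->
  G * 512 <= 5 * a * c^+3 * Z^+2 * r ->
  16 * (a * Z) <= c * (8 - ct) -> 0 < ct -> ct * (1 + 8 * c) < 8 ->
  (forall t, (t <= t0)%N -> t%:R * (a * Z) <= ct) ->
  8 * c^+2 * r <= B ->
  (forall t p, 0 <= p -> (forall i, i \in Cs -> `|phi i t| <= p) ->
    zeta t.+1 - zeta t <= a / 8 * (`|zeta t| + p) ^+ 2 + E /\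
    (p <= `|zeta t| -> a / 8 * (`|zeta t| - p) ^+ 2 - E <= zeta t.+1 - zeta t)) ->
  (forall t k, k \in Cs -> `|phi k t.+1| <=
    `|phi k t| + 3 * a * c ^+ 2 * r / 256 * (`|phi k t| + `|zeta t|) ^+ 2 + G) ->
  (forall k, k \in Cs -> `|phi k 0%N| <= c / 8 * Z) ->
  forall t, (t <= t0)%N ->
  [/\ zeta 0%N <= zeta t,
      (Z^-1 + (1/8 + c) * a * t%:R)^-1 <= - zeta t &
      forall k, k \in Cs -> `|phi k t| <=
        c / 8 * Z + c^+2 * r / 4 * (zeta t - zeta 0%N) + t%:R * (G + c^+2 * r / 4 * E)].
Proof.
move=> c0 c8 a0 Z0 ZE r0 r8 E0 HE G0 HG aZc ct0 ctc HT HB1 Zstep Pstep Hph0.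
have WZ : forall t, Z * (Z^-1 + (1/8 + c) * a * t%:R) =
    1 + (1/8 + c) * (t%:R * (a * Z)).
  by move=> t; field; nz.
have T0 : forall t, 0 <= t%:R * (a * Z).
  by move=> t; apply: mulr_ge0; [exact: ler0n | apply: mulr_ge0; lra].
have aZ2 : a * Z <= c / 2.
  have : 0 <= c * ct by apply: mulr_ge0; lra.
  move: aZc; clear; lra.
have cct : (1/8 + c) * ct < 1 by move: ctc; clear; lra.
elim=> [|t IH] ht.
  rewrite (_ : (0%N)%:R = 0 :> R) // mulr0 addr0 invrK subrr mulr0 mul0r !addr0.
  split; [exact: lexx | by rewrite ZE |].
  by move=> k hk; apply: Hph0.
have [z0t Wv Hf] := IH (ltnW ht).
set W := Z^-1 + (1/8 + c) * a * t%:R in Wv WZ.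
have eW : Z^-1 + (1/8 + c) * a * t.+1%:R = W + (1/8 + c) * a.
  by rewrite /W -natr1; ring.
rewrite eW.
have hT := HT _ (ltnW ht).
have W0 : 0 < W.
  have : 0 < Z * W.
    rewrite WZ; have : 0 <= (1/8 + c) * (t%:R * (a * Z)) by apply: mulr_ge0; [lra | exact: T0].
    clear; lra.
  by rewrite pmulr_rgt0.
have ZW1 : 1 <= Z * W.
  rewrite WZ; have : 0 <= (1/8 + c) * (t%:R * (a * Z)) by apply: mulr_ge0; [lra | exact: T0].
  clear; lra.
have ZW2 : Z * W <= 2.
  rewrite WZ; have : (1/8 + c) * (t%:R * (a * Z)) <= (1/8 + c) * ct by apply: ler_wpM2l => //; lra.
  move: cct; clear; lra.
set v := - zeta t in Wv.
have v0 : 0 < v by apply: lt_le_trans Wv; rewrite invr_gt0.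
have vZ : v <= Z by rewrite /v ZE; move: z0t; clear; lra.
have WZ' := invle Z0 W0 ZW1.
have Zv := negZv Z0 W0 Wv ZW2.
have nz0 : `|zeta t| = v by rewrite ler0_norm // /v; move: v0; rewrite /v; clear; lra.
have w0 : 0 <= zeta t - zeta 0%N by move: z0t; clear; lra.
have wZ : zeta t - zeta 0%N <= Z by rewrite ZE; move: v0; rewrite /v; clear; lra.
have tt0 : 0 <= (t%:R : R) by exact: ler0n.
have taZ : t%:R * (a * Z) <= 8 by move: hT ctc ct0 c0; clear; nra.
have [p0 pv pB] := neg_aux c0 c8 a0 Z0 r0 r8 E0 HE G0 HG tt0 taZ Zv w0 wZ HB1.
set p := c / 8 * Z + c ^+ 2 * r / 4 * (zeta t - zeta 0%N) + t%:R * (G + c ^+ 2 * r / 4 * E) in p0 pv pB Hf.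
have [hhi hlo] := Zstep t p p0 Hf.
have pv' : p <= `|zeta t|.
  rewrite nz0; have : c * v <= v / 8 by nra.
  move: pv v0; clear; lra.
have hlo' := hlo pv'.
rewrite nz0 in hhi hlo'.
have ev : zeta t.+1 - zeta t = v - (- zeta t.+1) by rewrite /v; ring.
rewrite ev in hhi hlo'.
have [h1 h2 h3] := neg_zeta c0 c8 a0 Z0 r0 r8 E0 HE aZ2 W0 Wv vZ WZ' Zv p0 pv hlo' hhi.
split => //.
  by move: h2 z0t; rewrite /v; clear; lra.
move=> k hk.
have hP := Pstep t k hk; rewrite nz0 in hP.
have F0 : 0 <= `|phi k t| by exact: normr_ge0.
have Fp := Hf k hk.
have Fv : `|phi k t| <= 3 * c / 8 * v by apply: le_trans Fp pv.
have := neg_phi (G:=G) c0 c8 a0 r0 F0 Fv (ltW v0) h3.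
rewrite -ev -(natr1 t).
move: hP Fp; rewrite /p; clear; lra.
Qed.
Theorem mainTheorem6 (R : realType) (tau kappa eta L : R) (d n : nat)
  (Cs : {set 'I_n}) (zeta : nat -> R) (phi : 'I_n -> nat -> R) :
  0 < tau -> 0 < kappa -> 0 < eta -> 0 < L ->
  (0 < d)%N -> (0 < n)%N -> (4 %| n)%N -> #|Cs| = (n %/ 4)%N ->
  (* update inclusion for zeta *)
  (forall t : nat,
     tau ^+ 2 * eta / (2 * n%:R) * (\sum_(i in Cs) (zeta t + phi i t) ^+ 2)
       - 3 / 2 * eta * tau * kappa * L <= zeta t.+1 - zeta t /\
     zeta t.+1 - zeta t <=
     tau ^+ 2 * eta / (2 * n%:R) * (\sum_(i in Cs) (zeta t + phi i t) ^+ 2)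
       + 3 / 2 * eta * tau * kappa * L) ->
  (* update inclusion for phi_k *)
  (forall (t : nat) (k : 'I_n), k \in Cs ->
     eta * (kappa ^+ 2 * d%:R / (4 * n%:R) * (`|phi k t| + `|zeta t|) ^+ 2
              - 5 / 2 * kappa * tau * L) <= phi k t.+1 - phi k t /\
     phi k t.+1 - phi k t <=
     eta * (3 * kappa ^+ 2 * d%:R / (4 * n%:R) * (`|phi k t| + `|zeta t|) ^+ 2
              + 5 / 2 * kappa * tau * L)) ->
  forall (ct Cphi : R) (t0 : nat),
  0 < ct -> ct < 8 / (1 + 8 * frakc kappa tau d) ->
  8 <= Cphi -> Cphi <= n%:R ->
  t0%:R <= ct / (tau ^+ 2 * eta * `|zeta 0%N|) ->
  (* condition 1 *)
  Num.sqrt (32 * L * n%:R / (frakc kappa tau d ^+ 2 * Num.sqrt d%:R))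
    <= `|zeta 0%N| ->
  `|zeta 0%N| <= frakc kappa tau d * (8 - ct) / (16 * eta * tau ^+ 2) ->
  (* condition 2 *)
  (forall k : 'I_n, k \in Cs -> `|phi k 0%N| <= frakc kappa tau d / 8 * `|zeta 0%N|) ->
  (* condition 3 *)
  frakc kappa tau d <= 1 / 4 - 2 / Cphi ->
  frakc kappa tau d <= n%:R * Cphi / 4 ->
  frakc kappa tau d <= powR (n%:R / 48) (3^-1) ->
  frakc kappa tau d <= 1 / 8 ->
  forall t : nat, (t <= t0)%N ->
    ((0 < zeta 0%N ->
        ((zeta 0%N)^-1 - (1 / 8 - frakc kappa tau d) * eta * tau ^+ 2 * t%:R)^-1 <= zeta t /\
        zeta t <= ((zeta 0%N)^-1 - (1 / 8 + frakc kappa tau d) * eta * tau ^+ 2 * t%:R)^-1) /\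
     (zeta 0%N < 0 -> zeta 0%N <= zeta t /\ zeta t <= 0)) /\
    (forall k : 'I_n, k \in Cs ->
       `|phi k t| <= Cphi * frakc kappa tau d ^+ 2 / n%:R * `|zeta t|
                     + frakc kappa tau d / 8 * `|zeta 0%N|).
Proof.
set c := frakc kappa tau d.
set N := n%:R.
set E := 3 / 2 * eta * tau * kappa * L.
set Z := `|zeta 0%N|.
set s := Num.sqrt d%:R.
move=> tau0 kap0 eta0 L0 d0 n0 n4 hCs Hz Hph ct Cp t0 ct0 ctlt Cp8 CpN Ht0 Hs1 Hs2 Hph0 Hc3 Hc4 Hc5 c8.
have N8 : 8 <= N by lra.
have N0 : 0 < N by lra.
pose r := N^-1.
have Nr : N * r = 1 by rewrite /r mulfV // gt_eqF.
have r0 : 0 < r by rewrite /r invr_gt0.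
have r8 : r <= 1/8 by nra.
have s0 : 0 < s by rewrite /s sqrtr_gt0 ltr0n.
have s2 : s ^+ 2 = d%:R by rewrite /s sqr_sqrtr // ler0n.
have c0 : 0 < c.
  rewrite /c /frakc -/s; apply: divr_gt0 => //; apply: mulr_gt0 => //; apply: mulr_gt0 => //.
have kapE : kappa = c * tau / (8 * s).
  rewrite /c /frakc -/s; field; nz.
have Hk2 : kappa ^+ 2 * d%:R = c ^+ 2 * tau ^+ 2 / 64.
  rewrite kapE -s2; field; nz.
pose a := tau ^+ 2 * eta.
have a0 : 0 < a by rewrite /a; apply: mulr_gt0 => //; apply: exprn_gt0.
set q := 32 * L * N / (c ^+ 2 * s) in Hs1.
have q0 : 0 < q.
  rewrite /q; apply: divr_gt0; first by apply: mulr_gt0 => //; apply: mulr_gt0 => //; lra.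
  by apply: mulr_gt0 => //; apply: exprn_gt0.
have Z0 : 0 < Z by apply: lt_le_trans Hs1; rewrite sqrtr_gt0.
have qZ : q <= Z ^+ 2.
  rewrite -(sqr_sqrtr (ltW q0)); apply: sqle => //; exact: sqrtr_ge0.
have Ls : L / s <= c ^+ 2 * Z ^+ 2 * r / 32.
  have cs0 : 0 < c ^+ 2 * s by apply: mulr_gt0 => //; apply: exprn_gt0.
  move: qZ; rewrite /q ler_pdivrMr // => h.
  rewrite ler_pdivrMr //.
  have -> : c ^+ 2 * Z ^+ 2 * r / 32 * s = (Z ^+ 2 * (c ^+ 2 * s)) * r / 32 by ring.
  have : 32 * L * (N * r) <= Z ^+ 2 * (c ^+ 2 * s) * r.
    have -> : 32 * L * (N * r) = 32 * L * N * r by ring.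
    by apply: ler_wpM2r => //; lra.
  rewrite Nr; lra.
have Ls0 : 0 <= L / s by apply: divr_ge0; lra.
have ac0 : 0 <= 96 * a * c by apply: mulr_ge0; [apply: mulr_ge0|]; lra.
have E0 : 0 <= E by rewrite /E; apply: mulr_ge0; [|lra]; apply: mulr_ge0; [|lra]; apply: mulr_ge0; lra.
have HE : E * 512 <= 3 * a * c ^+ 3 * Z ^+ 2 * r.
  have -> : E * 512 = 96 * a * c * (L / s).
    rewrite /E /a kapE; field; nz.
  have : 96 * a * c * (L / s) <= 96 * a * c * (c ^+ 2 * Z ^+ 2 * r / 32) by apply: ler_wpM2l.
  have -> : 3 * a * c ^+ 3 * Z ^+ 2 * r = 96 * a * c * (c ^+ 2 * Z ^+ 2 * r / 32).
    by rewrite exprS; field.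
  done.
pose G := eta * (5 / 2 * kappa * tau * L).
have G0 : 0 <= G by rewrite /G; apply: mulr_ge0; [lra|]; apply: mulr_ge0; [|lra]; apply: mulr_ge0; lra.
have HG : G * 512 <= 5 * a * c ^+ 3 * Z ^+ 2 * r.
  have -> : G * 512 = 160 * a * c * (L / s).
    rewrite /G /a kapE; field; nz.
  have ac1 : 0 <= 160 * a * c by apply: mulr_ge0; [apply: mulr_ge0|]; lra.
  have : 160 * a * c * (L / s) <= 160 * a * c * (c ^+ 2 * Z ^+ 2 * r / 32) by apply: ler_wpM2l.
  have -> : 5 * a * c ^+ 3 * Z ^+ 2 * r = 160 * a * c * (c ^+ 2 * Z ^+ 2 * r / 32).
    by rewrite exprS; field.
  done.
have aZc : 16 * (a * Z) <= c * (8 - ct).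
  have et0 : 0 < 16 * eta * tau ^+ 2 by apply: mulr_gt0; [lra| apply: exprn_gt0].
  move: Hs2; rewrite ler_pdivlMr // => h.
  have -> : 16 * (a * Z) = Z * (16 * eta * tau ^+ 2) by rewrite /a; ring.
  done.
have ctc : ct * (1 + 8 * c) < 8.
  by move: ctlt; rewrite ltr_pdivlMr //; lra.
have HT : forall t, (t <= t0)%N -> 0 <= t%:R * (a * Z) /\ t%:R * (a * Z) <= ct.
  move=> t ht; split; first by apply: mulr_ge0; [exact: ler0n| apply: mulr_ge0; lra].
  have aZ0 : 0 < a * Z by apply: mulr_gt0.
  move: Ht0; rewrite ler_pdivlMr // => h.
  apply: le_trans h; apply: ler_wpM2r; [lra|]; by rewrite ler_nat.
have Hcs : (#|Cs|%:R : R) = N / 4.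
  have h := divnK n4; rewrite hCs.
  have : ((n %/ 4)%:R * 4 : R) = N by rewrite /N -natrM h.
  by move=> h2; rewrite -h2; field; nz.
have Zstep : forall t p, 0 <= p -> (forall i, i \in Cs -> `|phi i t| <= p) ->
    zeta t.+1 - zeta t <= a / 8 * (`|zeta t| + p) ^+ 2 + E /\
    (p <= `|zeta t| -> a / 8 * (`|zeta t| - p) ^+ 2 - E <= zeta t.+1 - zeta t).
  move=> t p p0 hp; have [lo hi] := Hz t.
  have k0 : 0 <= tau ^+ 2 * eta / (2 * N).
    by apply: divr_ge0; [apply: mulr_ge0; [apply: exprn_ge0|]|]; lra.
  have eK : forall x, tau ^+ 2 * eta / (2 * N) * (#|Cs|%:R * x) = a / 8 * x.
    by move=> x; rewrite Hcs /a; field; nz.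
  split.
  - have hs : #|Cs|%:R * 0 <= \sum_(i in Cs) (zeta t + phi i t) ^+ 2 <=
              #|Cs|%:R * (`|zeta t| + p) ^+ 2.
      apply: sum_bnd => i hi'; apply/andP; split; first exact: sqr_ge0.
      have hpp := hp i hi'.
      rewrite -(real_normK (num_real (zeta t + phi i t))).
      apply: sqle; first exact: normr_ge0.
      apply: (le_trans (ler_normD _ _)); lra.
    move: hs => /andP [_ hs].
    have := ler_wpM2l k0 hs; rewrite eK; lra.
  - move=> pz.
    have hs : #|Cs|%:R * (`|zeta t| - p) ^+ 2 <= \sum_(i in Cs) (zeta t + phi i t) ^+ 2 <=
              #|Cs|%:R * (`|zeta t| + p) ^+ 2.
      by apply: sum_bnd => i hi'; apply: sq_bnd => //; apply: hp.
    move: hs => /andP [hs _].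
    have := ler_wpM2l k0 hs; rewrite eK; lra.
have Pstep : forall t k, k \in Cs -> `|phi k t.+1| <=
    `|phi k t| + 3 * a * c ^+ 2 * r / 256 * (`|phi k t| + `|zeta t|) ^+ 2 + G.
  move=> t k hk; have [lo hi] := Hph t k hk.
  set S := (`|phi k t| + `|zeta t|) ^+ 2 in lo hi *.
  have S0 : 0 <= S by apply: sqr_ge0.
  have e1 : eta * (3 * kappa ^+ 2 * d%:R / (4 * N) * S + 5 / 2 * kappa * tau * L) =
            3 * a * c ^+ 2 * r / 256 * S + G.
    have -> : 3 * kappa ^+ 2 * d%:R = 3 * (kappa ^+ 2 * d%:R) by ring.
    rewrite Hk2 /a /G /r; field; nz.
  have e2 : eta * (kappa ^+ 2 * d%:R / (4 * N) * S - 5 / 2 * kappa * tau * L) =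
            a * c ^+ 2 * r / 256 * S - G.
    rewrite Hk2 /a /G /r; field; nz.
  rewrite e1 in hi; rewrite e2 in lo.
  have T0 : 0 <= a * c ^+ 2 * r / 256 * S.
    apply: mulr_ge0 => //; apply: divr_ge0; [|lra]; apply: mulr_ge0; [|lra].
    apply: mulr_ge0; [lra| apply: exprn_ge0; lra].
  have T1 : 3 * a * c ^+ 2 * r / 256 * S = 3 * (a * c ^+ 2 * r / 256 * S) by ring.
  have hb : - `|phi k t| <= phi k t <= `|phi k t| by rewrite -ler_norml.
  move: hb => /andP [hb1 hb2].
  rewrite ler_norml; apply/andP; split; move: lo hi T0 T1 hb1 hb2; clear; lra.
have Bdef : Cp * c ^+ 2 / N = Cp * c ^+ 2 * r by [].
have c20 : 0 <= c ^+ 2 by apply: exprn_ge0; lra.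
have B1 : 8 * c ^+ 2 * r <= Cp * c ^+ 2 / N.
  rewrite Bdef; apply: ler_wpM2r; first lra.
  by apply: ler_wpM2r.
have B2 : Cp * c ^+ 2 / N <= c ^+ 2.
  rewrite Bdef.
  have : Cp * r <= N * r by apply: ler_wpM2r; lra.
  rewrite Nr => h.
  have -> : Cp * c ^+ 2 * r = c ^+ 2 * (Cp * r) by ring.
  have : c ^+ 2 * (Cp * r) <= c ^+ 2 * 1 by apply: ler_wpM2l.
  by rewrite mulr1.
have HT' : forall t, (t <= t0)%N -> t%:R * (a * Z) <= ct by move=> t ht; have [] := HT t ht.
have eA : forall t : nat, (1 / 8 - c) * eta * tau ^+ 2 * t%:R = (1 / 8 - c) * a * t%:R.
  by move=> t; rewrite /a; ring.
have eB : forall t : nat, (1 / 8 + c) * eta * tau ^+ 2 * t%:R = (1 / 8 + c) * a * t%:R.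
  by move=> t; rewrite /a; ring.
move=> t ht.
rewrite eA eB.
case: (ltrgtP 0 (zeta 0%N)) => hz0.
-
  have ZE : Z = zeta 0%N by rewrite /Z ger0_norm // ltW.
  rewrite ZE in HE HG aZc HT' Hph0.
  have [h1 h2 h3] := @pos_case R n Cs zeta phi a c E G r (Cp * c ^+ 2 / N) ct t0
    c0 c8 a0 hz0 r0 r8 E0 HE G0 HG aZc ctc HT' B1 B2 Zstep Pstep Hph0 t ht.
  split; last by rewrite ZE; exact: h3.
  split; first by move=> _; split.
  by move=> hneg; move: hz0 hneg; clear; lra.
-
  have ZE : Z = - zeta 0%N by rewrite /Z ler0_norm // ltW.
  have [z0t Wv Hf] := @neg_case R n Cs zeta phi a c E G r (Cp * c ^+ 2 / N) ct Z t0
    c0 c8 a0 Z0 ZE r0 r8 E0 HE G0 HG aZc ct0 ctc HT' B1 Zstep Pstep Hph0 t ht.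
  have T0 : 0 <= t%:R * (a * Z).
    by apply: mulr_ge0; [exact: ler0n | apply: mulr_ge0; lra].
  have WZ : Z * (Z^-1 + (1/8 + c) * a * t%:R) = 1 + (1/8 + c) * (t%:R * (a * Z)).
    by field; nz.
  set W := Z^-1 + (1/8 + c) * a * t%:R in Wv WZ.
  have W0 : 0 < W.
    have : 0 < Z * W.
      rewrite WZ; have : 0 <= (1/8 + c) * (t%:R * (a * Z)) by apply: mulr_ge0; [lra | exact: T0].
      clear; lra.
    by rewrite pmulr_rgt0.
  have hT := HT' t ht.
  have ZW2 : Z * W <= 2.
    rewrite WZ; have : (1/8 + c) * (t%:R * (a * Z)) <= (1/8 + c) * ct by apply: ler_wpM2l => //; lra.
    move: ctc; clear; lra.
  have v0 : 0 < - zeta t by apply: lt_le_trans Wv; rewrite invr_gt0.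
  have Zv := negZv Z0 W0 Wv ZW2.
  split.
    split; first by move=> hp; move: hp hz0; clear; lra.
    by move=> _; split => //; move: v0; clear; lra.
  move=> k hk.
  have w0 : 0 <= zeta t - zeta 0%N by move: z0t; clear; lra.
  have wZ : zeta t - zeta 0%N <= Z by rewrite ZE; move: v0; clear; lra.
  have tt0 : 0 <= (t%:R : R) by exact: ler0n.
  have taZ : t%:R * (a * Z) <= 8 by move: hT ctc ct0 c0; clear; nra.
  have [_ _ pB] := neg_aux c0 c8 a0 Z0 r0 r8 E0 HE G0 HG tt0 taZ Zv w0 wZ B1.
  have nz0 : `|zeta t| = - zeta t by rewrite ler0_norm //; move: v0; clear; lra.
  rewrite nz0; exact: le_trans (Hf k hk) pB.
-
  by move: Z0; rewrite /Z -hz0 normr0; clear; lra.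
Qed.
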